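(* Let $A,r,a,\mu>0$ and $0<\beta_0<1$, and consider the system $$\dot S = S(A-S)-\beta_0 IS,\qquad \dot I=\beta_0 IS-\mu I-\frac{rI}{a+I}.$$ Let $\Delta=\big(a\beta_0+A-\frac{\mu}{\beta_0}\big)^2-4r$, assume $\Delta>0$, and let $$S_3=\tfrac12\Big(a\beta_0+A+\tfrac{\mu}{\beta_0}-\sqrt\Delta\Big),\quad S_4=\tfrac12\Big(a\beta_0+A+\tfrac{\mu}{\beta_0}+\sqrt\Delta\Big),\quad E_j=\Big(S_j,\frac{A-S_j}{\beta_0}\Big)\ (j=3,4),$$ and assume $S_3<S_4<A$. Then the endemic equilibrium $E_3$ is a sink and the endemic equilibrium $E_4$ is a saddle.
   Context: $\mu$ denotes the total death rate of infectious individuals. $E_3,E_4$ are the endemic equilibria (zeros of the vector field with $I\neq 0$). A sink is an equilibrium whose Jacobian eigenvalues all have negative real part; a saddle is an equilibrium whose Jacobian has two real eigenvalues of opposite signs. *)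

(* Defs.v *)
From Stdlib Require Import Reals Lra.
From Coquelicot Require Import Coquelicot.
Open Scope R_scope.

Definition fS (A beta0 : R) (S I : R) : R := S * (A - S) - beta0 * I * S.
Definition fI (r a mu beta0 : R) (S I : R) : R :=
  beta0 * I * S - mu * I - r * I / (a + I).

Definition jac11 (f : R -> R -> R) (s i : R) : R := Derive (fun x => f x i) s.
Definition jac12 (f : R -> R -> R) (s i : R) : R := Derive (fun y => f s y) i.
Definition jac21 (g : R -> R -> R) (s i : R) : R := Derive (fun x => g x i) s.
Definition jac22 (g : R -> R -> R) (s i : R) : R := Derive (fun y => g s y) i.

Definition is_jac_eigenvalue (f g : R -> R -> R) (s i : R) (l : C) : Prop :=
  ((l - RtoC (jac11 f s i)) * (l - RtoC (jac22 g s i))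
     - RtoC (jac12 f s i) * RtoC (jac21 g s i))%C = 0%C.

Definition is_equilibrium (f g : R -> R -> R) (s i : R) : Prop :=
  f s i = 0 /\ g s i = 0.

Definition is_sink (f g : R -> R -> R) (s i : R) : Prop :=
  is_equilibrium f g s i /\
  forall l : C, is_jac_eigenvalue f g s i l -> Re l < 0.

Definition is_saddle (f g : R -> R -> R) (s i : R) : Prop :=
  is_equilibrium f g s i /\
  exists l1 l2 : R, is_jac_eigenvalue f g s i (RtoC l1) /\
                    is_jac_eigenvalue f g s i (RtoC l2) /\ l1 < 0 < l2.

(* Main.v *)
Require Import Defs.
From Stdlib Require Import Reals Lra.
From Coquelicot Require Import Coquelicot.
Open Scope R_scope.

Lemma J11 A b s i : jac11 (fS A b) s i = A - 2*s - b*i.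
Proof. unfold jac11, fS. apply is_derive_unique. auto_derive; auto. ring. Qed.
Lemma J12 A b s i : jac12 (fS A b) s i = - b*s.
Proof. unfold jac12, fS. apply is_derive_unique. auto_derive; auto. ring. Qed.
Lemma J21 r a mu b s i : jac21 (fI r a mu b) s i = b*i.
Proof. unfold jac21, fI. apply is_derive_unique. auto_derive; auto. ring. Qed.
Lemma J22 r a mu b s i : a + i <> 0 -> jac22 (fI r a mu b) s i = b*s - mu - r*a/(a+i)^2.
Proof. intros H. unfold jac22, fI. apply is_derive_unique. auto_derive; auto. field. auto. Qed.

Lemma eig_eq2 j11 j22 j12 j21 x y :
  (((x,y) - RtoC j11) * ((x,y) - RtoC j22) - RtoC j12 * RtoC j21)%C = 0%C ->
  (x - j11)*(x-j22) - y*y - j12*j21 = 0 /\ y*(2*x - j11 - j22) = 0.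
Proof.
  unfold RtoC, Cplus, Cminus, Cmult, Copp, Cplus; simpl.
  intros H. injection H. intros. split; nra.
Qed.

Lemma sink_gen f g s i : is_equilibrium f g s i ->
  jac11 f s i + jac22 g s i < 0 ->
  jac11 f s i * jac22 g s i - jac12 f s i * jac21 g s i > 0 -> is_sink f g s i.
Proof.
  intros He T D. split; auto. intros [x y] Hl. unfold is_jac_eigenvalue in Hl.
  apply eig_eq2 in Hl. destruct Hl as [H1 H2]. simpl.
  destruct (Req_dec y 0) as [Hy|Hy].
  - subst y. nra.
  - apply Rmult_integral in H2. destruct H2 as [H2|H2]; [contradiction|lra].
Qed.

Lemma root_eig j11 j22 j12 j21 x :
  (x - j11)*(x-j22) - j12*j21 = 0 ->
  ((RtoC x - RtoC j11) * (RtoC x - RtoC j22) - RtoC j12 * RtoC j21)%C = 0%C.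
Proof.
  intros H. unfold RtoC, Cplus, Cminus, Cmult, Copp, Cplus; simpl. f_equal; nra.
Qed.

Lemma saddle_gen f g s i : is_equilibrium f g s i ->
  jac11 f s i * jac22 g s i - jac12 f s i * jac21 g s i < 0 -> is_saddle f g s i.
Proof.
  intros He D. split; auto. unfold is_jac_eigenvalue.
  generalize (jac11 f s i) (jac22 g s i) (jac12 f s i) (jac21 g s i) D.
  clear D. intros a b c d D.
  set (T := a + b).
  set (Dt := a * b - c * d).
  fold Dt in D.
  assert (Hp : 0 <= T*T - 4*Dt) by (pose proof (Rle_0_sqr T); unfold Rsqr in *; lra).
  pose proof (sqrt_sqrt _ Hp) as Hs.
  pose proof (sqrt_pos (T*T - 4*Dt)).
  set (q := sqrt (T*T-4*Dt)) in *.
  assert (T < q) by nra. assert (-T < q) by nra.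
  exists ((T - q)/2), ((T + q)/2).
  unfold is_jac_eigenvalue.
  split; [|split].
  - apply root_eig.
    replace (((T - q) / 2 - a) * ((T - q) / 2 - b) - c * d) with ((q*q - (T*T - 4*Dt))/4) by (unfold T, Dt; field).
    rewrite Hs; field.
  - apply root_eig.
    replace (((T + q) / 2 - a) * ((T + q) / 2 - b) - c * d) with ((q*q - (T*T - 4*Dt))/4) by (unfold T, Dt; field).
    rewrite Hs; field.
  - lra.
Qed.

Lemma gen A r a mu b S w w' : 0<A -> 0<r -> 0<a -> 0<mu -> 0<b -> b<1 ->
  w = a*b+A-S -> w' = S - mu/b -> w*w' = r -> S < A -> 0 < w' ->
  is_equilibrium (fS A b) (fI r a mu b) S ((A-S)/b) /\
  jac11 (fS A b) S ((A-S)/b) = -S /\ jac12 (fS A b) S ((A-S)/b) = -b*S /\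
  jac21 (fI r a mu b) S ((A-S)/b) = A - S /\
  jac22 (fI r a mu b) S ((A-S)/b) = b*w'*(A-S)/w.
Proof.
  intros HA Hr Ha Hmu Hb Hb1 Hw Hw' Hr' HS Hw'p.
  assert (Hwp : 0 < w) by nra.
  assert (Hai : a + (A-S)/b = w/b) by (subst w; field; lra).
  assert (Hai0 : a + (A-S)/b <> 0) by (rewrite Hai; apply Rgt_not_eq, Rdiv_lt_0_compat; lra).
  split; [split|split; [|split; [|split]]].
  - unfold fS. field. lra.
  - unfold fI. rewrite Hai, <- Hr', Hw'. field. split; lra.
  - rewrite J11. field. lra.
  - rewrite J12. ring.
  - rewrite J21. field. lra.
  - rewrite J22 by auto. rewrite Hai, <- Hr'.
    replace mu with (b*(S - w')) by (rewrite Hw'; field; lra).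
    replace a with ((w - A + S)/b) by (rewrite Hw; field; lra).
    field. split; lra.
Qed.

Theorem lemma5p4 (A r a mu beta0 : R) :
  0 < A -> 0 < r -> 0 < a -> 0 < mu -> 0 < beta0 -> beta0 < 1 ->
  let Delta := (a * beta0 + A - mu / beta0) ^ 2 - 4 * r in
  0 < Delta ->
  let S3 := (a * beta0 + A + mu / beta0 - sqrt Delta) / 2 in
  let S4 := (a * beta0 + A + mu / beta0 + sqrt Delta) / 2 in
  S3 < S4 -> S4 < A ->
  is_sink (fS A beta0) (fI r a mu beta0) S3 ((A - S3) / beta0) /\
  is_saddle (fS A beta0) (fI r a mu beta0) S4 ((A - S4) / beta0).
Proof.
  intros HA Hr Ha Hmu Hb Hb1 Delta HD S3 S4 H34 H4A.
  pose proof (sqrt_sqrt Delta (Rlt_le _ _ HD)) as Hs.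
  pose proof (sqrt_lt_R0 Delta HD) as Hsp.
  set (sD := sqrt Delta) in *.
  set (X := a*beta0 + A - mu/beta0).
  set (u := (X + sD)/2). set (v := (X - sD)/2).
  assert (Huv : u*v = r).
  { replace (u*v) with ((X*X - sD*sD)/4) by (unfold u, v; field).
    rewrite Hs. unfold Delta, X. field. lra. }
  assert (E3 : S3 = a*beta0 + A - u) by (unfold S3, u, X; field; lra).
  assert (E4 : S4 = a*beta0 + A - v) by (unfold S4, v, X; field; lra).
  assert (E3' : v = S3 - mu/beta0) by (unfold S3, v, X; field; lra).
  assert (E4' : u = S4 - mu/beta0) by (unfold S4, u, X; field; lra).
  assert (Hvu : v < u) by (unfold u, v; lra).
  assert (Hv : a*beta0 < v) by lra.
  assert (Habp : 0 < a*beta0) by nra.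
  assert (Hmb : 0 < mu/beta0) by (apply Rdiv_lt_0_compat; lra).
  split.
  - destruct (gen A r a mu beta0 S3 u v) as [Heq [J1 [J2 [J3 J4]]]]; auto; try lra.
    apply sink_gen; auto; rewrite ?J1, ?J2, ?J3, ?J4.
    + assert (beta0 * v * (A - S3) / u < beta0 * v).
      { apply (Rmult_lt_reg_r u); [lra|]. field_simplify; [|lra].
        assert (0 < beta0*v) by nra.
        pose proof (Rmult_lt_compat_l (beta0*v) (A-S3) u ltac:(lra) ltac:(lra)). lra. }
      nra.
    + assert (beta0 * v * (A - S3) / u < beta0 * (A - S3)).
      { apply (Rmult_lt_reg_r u); [lra|]. field_simplify; [|lra].
        assert (0 < beta0*(A-S3)) by nra.
        pose proof (Rmult_lt_compat_l (beta0*(A-S3)) v u ltac:(lra) ltac:(lra)). lra. }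
      nra.
  - destruct (gen A r a mu beta0 S4 v u) as [Heq [J1 [J2 [J3 J4]]]]; auto; try lra.
    apply saddle_gen; auto; rewrite ?J1, ?J2, ?J3, ?J4.
    assert (beta0 * u * (A - S4) / v > beta0 * (A - S4)).
    { apply (Rmult_lt_reg_r v); [lra|]. field_simplify; [|lra].
      assert (0 < beta0*(A-S4)) by nra.
      pose proof (Rmult_lt_compat_l (beta0*(A-S4)) v u ltac:(lra) ltac:(lra)). lra. }
    nra.
Qed.
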